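(* Let $n,q,L$ be positive integers and $r\in[0,1)$ with $rn\in\mathbb{N}$. Let $V=\bigcup_{i=1}^n V_i$ with $V_i=\{(i,a):a\in[q]\}$, and let $H=(V,E)$ be an $n$-uniform $n$-partite hypergraph with these parts which is $(n+(L+1)rn,\,L+1)$-sparse. Then the code $C_H=\{\psi(e):e\in E\}\subseteq[q]^n$ is $(r,L)$ list-decodable.
   Context: A hypergraph is $n$-uniform if all edges have size $n$; $n$-partite with parts $V_1,\dots,V_n$ if every edge meets each $V_i$ in exactly one vertex. For an edge $e=\{(i,x_i):i\in[n]\}$, $\psi(e)=(x_1,\dots,x_n)\in[q]^n$. An $n$-uniform hypergraph is $(v,e)$-sparse if any $e$ distinct edges $A_1,\dots,A_e$ satisfy $|\bigcup_{i=1}^e A_i|>v$. A code $C\subseteq[q]^n$ is $(r,L)$ list-decodable if every Hamming ball of radius $rn$ in $[q]^n$ contains at most $L$ codewords. *)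

(* Defs.v *)
From mathcomp Require Import all_boot all_order all_algebra.
Set Implicit Arguments. Unset Strict Implicit. Unset Printing Implicit Defensive.
Import Order.TTheory GRing.Theory Num.Theory.

(* Vertices of the n-partite hypergraph: V_i = {(i,a) : a in [q]}, i.e. the
   vertex set V = 'I_n * 'I_q (the pair (i,a) is the a-th vertex of part i). *)
Definition vertex (n q : nat) := ('I_n * 'I_q)%type.

(* A hypergraph on V is given by its edge set E, a set of subsets of V. *)

Definition uniform (n q : nat) (E : {set {set vertex n q}}) : Prop :=
  forall e, e \in E -> #|e| = n.

Definition partite (n q : nat) (E : {set {set vertex n q}}) : Prop :=
  forall e, e \in E -> forall i : 'I_n, #|[set a : 'I_q | (i, a) \in e]| = 1.

Definition sparse (n q : nat) (E : {set {set vertex n q}}) (v k : nat) : Prop :=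
  forall S : {set {set vertex n q}}, S \subset E -> #|S| = k ->
    v < #|\bigcup_(A in S) A|.

Definition word (n q : nat) := {ffun 'I_n -> 'I_q}.

(* psi(e) = w  iff  e = {(i, w_i) : i in [n]} meets V_i at (i, w i) for all i
   (for an edge of an n-partite hypergraph this determines w uniquely). *)
Definition psi_is (n q : nat) (e : {set vertex n q}) (w : word n q) : bool :=
  [forall i, (i, w i) \in e].

Definition code_of (n q : nat) (E : {set {set vertex n q}}) : {set word n q} :=
  [set w | [exists e in E, psi_is e w]].

Definition hamming (n q : nat) (x y : word n q) : nat := #|[set i | x i != y i]|.

Definition list_decodable (R : realFieldType) (n q : nat) (C : {set word n q})
    (r : R) (L : nat) : Prop :=
  forall x : word n q,
    (#|[set c in C | ((hamming x c)%:R <= r * n%:R)%R]| <= L)%N.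

(* Main.v *)
Require Import Defs.
From mathcomp Require Import all_boot all_order all_algebra.
Import Order.TTheory GRing.Theory Num.Theory.

Lemma card_bigcup_le (T I : finType) (P : {pred I}) (F : I -> {set T}) :
  (#|\bigcup_(i in P) F i| <= \sum_(i in P) #|F i|)%N.
Proof.
elim/big_rec2: _ => [|i m U _ leUm]; first by rewrite cards0.
by rewrite (leq_trans (leq_card_setU (F i) U).1) ?leq_add2l.
Qed.

Theorem lemma4p5 (R : realFieldType) (n q L : nat)
    (hn : (0 < n)%N) (hq : (0 < q)%N) (hL : (0 < L)%N)
    (r : R) (hr0 : (0 <= r)%R) (hr1 : (r < 1)%R)
    (t : nat) (ht : (r * n%:R = t%:R)%R)
    (E : {set {set vertex n q}})
    (Hunif : uniform E) (Hpart : partite E)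
    (Hsparse : sparse E (n + L.+1 * t) L.+1) :
  list_decodable (code_of E) r L.
Proof.
move=> x; rewrite leqNgt; apply/negP => HB.
set B := [set c in code_of E | _] in HB.
have /card_geqP [s [us ss sub]] := HB.
set B' := [set w in s].
have cB' : #|B'| = L.+1 by rewrite cardsE (card_uniqP us).
pose f (w : word n q) : {set vertex n q} := [set (i, w i) | i : 'I_n].
have finj : injective f.
  move=> w w' Hf; apply/ffunP => i.
  have : (i, w i) \in f w' by rewrite -Hf; apply/imsetP; exists i.
  by case/imsetP => j _ [-> ->].
have cf w : #|f w| = n.
  by rewrite card_imset ?card_ord // => i j [].
have fE w : w \in code_of E -> f w \in E.
  rewrite inE => /existsP [e /andP [eE /forallP pe]].
  suff -> : f w = e by [].
  apply/eqP; rewrite eqEcard cf (Hunif _ eE) leqnn andbT.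
  by apply/subsetP => v /imsetP [i _ ->].
have Bt w : w \in B' -> w \in code_of E /\ (hamming x w <= t)%N.
  rewrite inE => /sub; rewrite inE => /andP [wC hw]; split => //.
  by rewrite -(ler_nat R) -ht.
pose D (w : word n q) : {set vertex n q} :=
  [set (i, w i) | i in [set i | x i != w i]].
have := Hsparse (f @: B').
rewrite card_imset // cB' => /(_ _ erefl).
have -> : f @: B' \subset E.
  by apply/subsetP => A /imsetP [w /Bt [wC _] ->]; exact: fE.
move=> /(_ erefl); apply/negP; rewrite -leqNgt.
have sU : \bigcup_(A in f @: B') A \subset f x :|: \bigcup_(w in B') D w.
  apply/subsetP => v /bigcupP [A /imsetP [w wB ->] /imsetP [i _ ->]].
  case: (eqVneq (x i) (w i)) => [<-|ne].
    by rewrite inE; apply/orP; left; apply/imsetP; exists i.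
  rewrite inE; apply/orP; right; apply/bigcupP; exists w => //.
  by apply/imsetP; exists i => //; rewrite inE.
apply: (leq_trans (subset_leq_card sU)).
apply: (leq_trans (leq_card_setU _ _).1).
rewrite cf leq_add2l.
apply: leq_trans; first exact: card_bigcup_le.
rewrite -cB' -sum_nat_const.
apply: leq_sum => w /Bt [_ hw].
apply: leq_trans hw.
exact: leq_imset_card.
Qed.
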